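(* Let $q$ be a prime power, $e\ge 2$ even, $r$ a positive integer, $a\in\mathbb{F}_{q^e}$ with $a\neq 0$, $f(x)=x^r(x^{q-1}+a)$, and $\ell=q^{e-1}+\cdots+q+1$. If $r\bmod\ell=hq+1$ for an integer $h$ with $q+1\nmid h$, then $f(x)$ does not permute $\mathbb{F}_{q^e}$.
   Context: $r\bmod\ell$ denotes the least nonnegative residue of $r$ modulo $\ell$. *)

(* Defs.v *)
From mathcomp Require Import all_boot all_order all_algebra all_field.
Set Implicit Arguments. Unset Strict Implicit. Unset Printing Implicit Defensive.
Import GRing.Theory.
Local Open Scope ring_scope.

Definition prime_power (q : nat) : Prop :=
  exists p k : nat, [/\ prime p, (0 < k)%N & q = (p ^ k)%N].

Definition ell (q e : nat) : nat := (\sum_(i < e) q ^ i)%N.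

Definition fpoly_map (F : finFieldType) (q r : nat) (a : F) (x : F) : F :=
  x ^+ r * (x ^+ (q.-1) + a).

Definition permutes (F : finFieldType) (f : F -> F) : Prop := bijective f.

(* Main.v *)
Require Import Defs.
From mathcomp Require Import all_boot all_order all_algebra all_field.
From mathcomp Require Import zify ring.
Set Implicit Arguments. Unset Strict Implicit. Unset Printing Implicit Defensive.

Lemma digits_inj B E (phi psi : 'I_E -> nat) : 0 < B ->
  (forall i, phi i < B) -> (forall i, psi i < B) ->
  \sum_(i < E) phi i * B ^ i = \sum_(i < E) psi i * B ^ i -> phi =1 psi.
Proof.
move=> B0; elim: E phi psi => [|E IH] phi psi Hphi Hpsi.
  by move=> _ [].
rewrite !big_ord_recl /= !expn0 !muln1.
have hb : forall i : nat, bump 0 i = i.+1 by [].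
under eq_bigr => i _ do rewrite hb expnS mulnCA.
under [in X in _ = X]eq_bigr => i _ do rewrite hb expnS mulnCA.
rewrite -!big_distrr /= => Heq.
have H0 : phi ord0 = psi ord0.
  have := congr1 (modn^~ B) Heq.
  by rewrite (addnC (phi ord0)) (addnC (psi ord0)) !(mulnC B) !modnMDl !modn_small.
move: Heq; rewrite H0 => /addnI /eqP; rewrite eqn_pmul2l // => /eqP Heq.
have IH' := IH (fun i => phi (lift ord0 i)) (fun i => psi (lift ord0 i))
   (fun i => Hphi _) (fun i => Hpsi _) Heq.
move=> i; case: (unliftP ord0 i) => [j ->|->] //; exact: IH'.
Qed.
Lemma c_neq1 q h : 1 < q -> ~~ (q + 1 %| h) -> (h * q + 1) %% (q + 1) != 1.
Proof.
move=> q1 nd; apply/negP => /eqP Hc.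
have : h * q + 1 == 0 + 1 %[mod q + 1] by rewrite Hc add0n modn_small //; lia.
rewrite eqn_modDr mod0n => /eqP H.
move: nd.
have cop : coprime (q + 1) q.
  by rewrite addn1 coprimeSn.
have : (q + 1 %| h * q) by rewrite /dvdn H.
by rewrite Gauss_dvdl // => ->.
Qed.

Lemma aux (A s q m c J : nat) : (A * ((q + 1) * m) + (s * (q + 1) + c)) * m + J = (A * m + s) * ((q + 1) * m) + (c * m + J).
Proof. ring. Qed.

Lemma d_lt q h : 1 < q -> ~~ (q + 1 %| h) ->
  (q + 1 - (h * q + 1) %% (q + 1)) %% (q + 1) < q.
Proof.
move=> q1 Hh; have cne1 := c_neq1 q1 Hh.
have cle : (h * q + 1) %% (q + 1) < q + 1 by rewrite ltn_pmod //; lia.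
case: (posnP ((h * q + 1) %% (q + 1))) => [c0|cpos].
  by rewrite c0 subn0 modnn; lia.
rewrite modn_small; first by move: cne1 cpos; lia.
lia.
Qed.

Lemma nt_key q E r h (phi : 'I_E -> nat) :
  1 < q -> 0 < E -> (forall i, phi i < q) ->
  r %% ((q + 1) * \sum_(i < E) (q ^ 2) ^ i) = h * q + 1 -> ~~ (q + 1 %| h) ->
  ((q + 1) * \sum_(i < E) (q ^ 2) ^ i %| r * \sum_(i < E) (q ^ 2) ^ i
       + \sum_(i < E) phi i * (q ^ 2) ^ i)
  = [forall i, phi i == (q + 1 - (h * q + 1) %% (q + 1)) %% (q + 1)].
Proof.
move=> q1 E0 Hphi Hr Hh.
have qq : q < q ^ 2 by rewrite -{1}(expn1 q) ltn_exp2l.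
set m := \sum_(i < E) (q ^ 2) ^ i.
set J := \sum_(i < E) phi i * (q ^ 2) ^ i.
have m0 : 0 < m.
  have : \sum_(i < E) 1 <= m by apply: leq_sum => i _; rewrite !expn_gt0 (ltnW q1).
  by rewrite sum1_card card_ord => H; apply: leq_trans H.
have Jle : J <= (q - 1) * m.
  rewrite /J /m big_distrr /=; apply: leq_sum => i _.
  rewrite leq_mul2r; apply/orP; right; have := Hphi i; clear; lia.
have Hdig : forall d, d < q -> (J == d * m) = [forall i, phi i == d].
  move=> d dq; rewrite /m big_distrr /=.
  apply/eqP/forallP.
    move=> HJ i; apply/eqP; move: HJ; rewrite /J => HJ.
    apply: (digits_inj (B := q ^ 2) (psi := fun _ => d) _ _ _ HJ).
    - by rewrite !expn_gt0 (ltnW q1).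
    - by move=> j; apply: ltn_trans qq.
    - by move=> j; apply: ltn_trans qq.
  by move=> H; rewrite /J; apply: eq_bigr => i _; rewrite (eqP (H i)).
clearbody J.
set c := (h * q + 1) %% (q + 1).
set d := (q + 1 - c) %% (q + 1).
have cne1 : c != 1 by exact: c_neq1.
have dq : d < q by exact: d_lt.
have cle : c < q + 1 by rewrite /c ltn_pmod // addn1.
set l := (q + 1) * m.
have Hred : (l %| r * m + J) = (l %| c * m + J).
  have Hr' := divn_eq r l; rewrite Hr in Hr'.
  have Hc' := divn_eq (h * q + 1) (q + 1); rewrite -/c in Hc'.
  have -> : r * m + J = (r %/ l * m + (h * q + 1) %/ (q + 1)) * l + (c * m + J).
    by rewrite {1}Hr' {1}Hc' /l aux.
  by rewrite dvdn_addr // dvdn_mull.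
rewrite Hred -Hdig //.
have dE : (c == 0) && (d == 0) || (0 < c) && (d == q + 1 - c).
  case: (posnP c) => [c0|cpos].
    by rewrite /d c0 subn0 modnn.
  rewrite /d modn_small; last by move: cpos; clear -cle; lia.
  by rewrite eqxx.
clearbody d c; clear Hred Hdig Hr Hh Hphi.
have lm : (q - 1) * m < l by rewrite /l ltn_pmul2r //; clear -q1; lia.
have qm : c * m <= q * m by rewrite leq_mul2r; apply/orP; right; clear -cle; lia.
rewrite /l in lm *; clearbody l.
case/orP: dE => /andP [/eqP c0 /eqP ->].
  rewrite c0 mul0n add0n.
  apply/idP/idP.
    move=> dv; apply/negPn/negP => Jn0.
    have := dvdn_leq _ dv; rewrite lt0n Jn0 => /(_ isT) => H.
    have := leq_trans H Jle; rewrite leqNgt lm; done.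
  by move/eqP ->; rewrite dvdn0.
have c2 : 1 < c by move: cne1 c0; clear; lia.
apply/idP/idP.
  case/dvdnP => w Hw.
  have w1 : w = 1.
    have H2 : (q - 1) * m + q * m < 2 * ((q + 1) * m).
      rewrite mulnA -mulnDl ltn_pmul2r //; clear -q1; lia.
    have cm0 : 0 < c * m by rewrite muln_gt0 m0 (ltnW c2).
    have wl2 : w * ((q + 1) * m) < 2 * ((q + 1) * m).
      by rewrite -Hw; move: H2 qm Jle; clear; lia.
    have wpos : 0 < w * ((q + 1) * m) by rewrite -Hw; move: cm0; clear; lia.
    rewrite ltn_pmul2r in wl2; last by rewrite muln_gt0 m0 addn1.
    by move: wpos wl2; rewrite muln_gt0; clear; lia.
  move: Hw; rewrite w1 mul1n mulnBl mulnDl mul1n => Hw.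
  apply/eqP; move: Hw qm; clear; lia.
move/eqP ->; rewrite -mulnDl subnKC; last by move: cle; clear; lia.
by rewrite dvdnn.
Qed.



Lemma ell_eq q E : ell q (E * 2) = (q + 1) * \sum_(i < E) (q ^ 2) ^ i.
Proof.
rewrite /ell -(big_mkord xpredT (fun i => q ^ i)) -(big_mkord xpredT (fun i => (q ^ 2) ^ i)).
elim: E => [|E IH]; first by rewrite mul0n !big_geq // muln0.
have -> : (E.+1 * 2 = (E * 2).+2)%N by lia.
rewrite !big_nat_recr //= IH -expnM (mulnC 2) (expnSr q (E * 2)).
set X := q ^ (E * 2); set S := \sum_(0 <= i < E) _.
ring.
Qed.

Section FieldLemmas.
Import GRing.Theory.
Local Open Scope ring_scope.
Lemma unit_pow (F : finFieldType) (x : F) : x != 0 -> x ^+ #|F|.-1 = 1.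
Proof.
move=> x0; apply: (mulfI x0); rewrite mulr1 -exprS prednK ?expf_card //.
exact: ltnW (finNzRing_gt1 F).
Qed.

Lemma sum_pow_dvd (F : finFieldType) (E : nat) : (#|F|%:R = 0 :> F) -> (0 < E)%N ->
  (#|F|.-1 %| E)%N -> \sum_(x : F) x ^+ E = -1.
Proof.
move=> c0 E0 dv; rewrite (bigD1 0) //= expr0n; have -> : (E == 0)%N = false by lia.
rewrite add0r (eq_bigr (fun _ => 1)); last first.
  move=> x x0; rewrite -(divnK dv) mulnC exprM unit_pow // expr1n //.
rewrite sumr_const cardC1.
have gt1 : (1 < #|F|)%N by exact: finNzRing_gt1.
by rewrite -subn1 natrB ?c0 ?sub0r //; exact: ltnW gt1.
Qed.

Lemma sum_pow_ndvd (F : finFieldType) (E : nat) :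
  ~~ (#|F|.-1 %| E)%N -> \sum_(x : F) x ^+ E = 0.
Proof.
move=> nd.
have gt1 : (1 < #|F|)%N by exact: finNzRing_gt1.
have [z /andP [z0 zE]] : exists z : F, (z != 0) && (z ^+ E != 1).
  case: (boolP [exists z : F, (z != 0) && (z ^+ E != 1)]) => [/existsP //|].
  rewrite negb_exists => /forallP H; exfalso.
  have n0 : (0 < #|F|.-1)%N by rewrite -subn1 subn_gt0.
  have : (size (enum (predC1 (0%R : F))) <= E %% #|F|.-1)%N.
    apply: max_unity_roots; last exact: enum_uniq.
      by rewrite lt0n.
    apply/allP => x; rewrite mem_enum inE => x0; apply/unity_rootP.
    have := H x; rewrite x0 /= negbK => /eqP E1.
    by rewrite -E1 {2}(divn_eq E #|F|.-1) exprD mulnC exprM unit_pow // expr1n mul1r.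
  by rewrite -cardE cardC1 leqNgt ltn_pmod.
set S := \sum_(x : F) x ^+ E.
have HS : S = z ^+ E * S.
  rewrite {1}/S (reindex_inj (mulfI z0)) /S mulr_sumr; apply: eq_bigr => x _.
  exact: exprMn.
move/eqP: HS; rewrite -subr_eq0 -{1}(mul1r S) -mulrBl mulf_eq0 subr_eq0 eq_sym.
by rewrite (negbTE zE) /= => /eqP.
Qed.

Lemma geomq (F : finFieldType) (q : nat) (v b : F) :
  [pchar F].-nat q -> (1 < q)%N -> q%:R = 0 :> F ->
  (v + b) ^+ q.-1 = \sum_(j < q) v ^+ j * (- b) ^+ (q.-1 - j).
Proof.
move=> Hn q1 q0.
have hN : (- b) ^+ q = - b ^+ q by rewrite exprNn_pchar.
have key := subrXX v (- b) q.
have -> : \sum_(j < q) v ^+ j * (- b) ^+ (q.-1 - j) =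
          \sum_(i < q) v ^+ (q.-1 - i) * (- b) ^+ i.
  rewrite (reindex_inj rev_ord_inj) /=; apply: eq_bigr => i _.
  have hi := ltn_ord i.
  have -> : (q - i.+1 = q.-1 - i)%N by lia.
  by rewrite subKn //; lia.
have [vb0|vb0] := eqVneq (v + b) 0.
  rewrite vb0 expr0n; have -> : (q.-1 == 0)%N = false by lia.
  have -> : v = - b by apply/eqP; rewrite -subr_eq0 opprK vb0.
  rewrite (eq_bigr (fun _ => (- b) ^+ q.-1)); last first.
    move=> i _; rewrite -exprD subnK //; have := ltn_ord i; lia.
  by rewrite sumr_const card_ord -[in RHS]mulr_natr q0 mulr0.
apply: (mulfI vb0); rewrite -exprS prednK; last by lia.
rewrite exprDn_pchar // -{2}[b]opprK -key hN.
by rewrite opprK.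
Qed.

Lemma expand (F : finFieldType) (q E r : nat) (a x : F) :
  [pchar F].-nat q -> (1 < q)%N -> q%:R = 0 :> F ->
  (x ^+ r * (x ^+ q.-1 + a)) ^+ (q.-1 * \sum_(i < E) (q ^ 2) ^ i) =
  \sum_(phi : {ffun 'I_E -> 'I_q})
     (\prod_(i < E) (- a ^+ ((q ^ 2) ^ i)%N) ^+ (q.-1 - phi i)) *
     x ^+ (q.-1 * (r * \sum_(i < E) (q ^ 2) ^ i + \sum_(i < E) phi i * (q ^ 2) ^ i)).
Proof.
move=> Hn q1 q0.
set m := (\sum_(i < E) (q ^ 2) ^ i)%N.
rewrite exprMn -exprM.
have -> : (x ^+ q.-1 + a) ^+ (q.-1 * m) =
    \prod_(i < E) \sum_(j < q) ((x ^+ q.-1) ^+ ((q ^ 2) ^ i)%N) ^+ j *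
          (- a ^+ ((q ^ 2) ^ i)%N) ^+ (q.-1 - j).
  rewrite mulnC exprM /m expr_sum -prodrXl; apply: eq_bigr => i _.
  by rewrite exprDn_pchar ?geomq // !pnatX Hn.
rewrite bigA_distr_bigA mulr_sumr; apply: eq_bigr => phi _.
rewrite big_split /= mulrA mulrC; congr (_ * _).
under eq_bigr => i _ do rewrite -!exprM.
rewrite prodrXr -exprD; congr (_ ^+ _).
rewrite mulnDr mulnCA; congr (_ + _)%N; rewrite big_distrr /=.
by apply: eq_bigr => i _; rewrite (mulnC (phi i)).
Qed.
End FieldLemmas.
Import GRing.Theory.

Theorem proposition4p2 (F : finFieldType) (q e r h : nat) (a : F) :
  prime_power q ->
  #|F| = (q ^ e)%N ->
  (2 <= e)%N -> ~~ odd e ->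
  (0 < r)%N ->
  a != 0%R ->
  (r %% ell q e)%N = (h * q + 1)%N ->
  ~~ ((q + 1) %| h)%N ->
  ~ permutes (fpoly_map q r a).
Proof.
move=> [p [k [pp k0 Hq]]] cardF e2 eeven r0 a0 Hr Hh bij.
have q1 : 1 < q by rewrite Hq -{1}(expn0 p) ltn_exp2l // prime_gt1.
set E := e./2.
have eE : e = (E * 2)%N.
  by have := odd_double_half e; rewrite (negbTE eeven) add0n -muln2.
have E0 : 0 < E by lia.
have pc : p \in [pchar F]%R by apply: (@card_finPcharP F p (k * e)) => //; rewrite cardF Hq expnM.
have Hn : [pchar F]%R.-nat q by rewrite Hq pnatX (pnatE _ pp) pc.
have q0 : (q%:R = 0 :> F)%R.
  by rewrite Hq natrX (pcharf0 pc) expr0n; have -> : (k == 0) = false by lia.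
have c0 : (#|F|%:R = 0 :> F)%R.
  by rewrite cardF natrX q0 expr0n; have -> : (e == 0) = false by lia.
set m := (\sum_(i < E) (q ^ 2) ^ i)%N.
have m0 : 0 < m.
  have : \sum_(i < E) 1 <= m by apply: leq_sum => i _; rewrite expn_gt0; lia.
  by rewrite sum1_card card_ord; lia.
have Hell : ell q e = ((q + 1) * m)%N by rewrite eE ell_eq.
have Hcard1 : (#|F|.-1 = q.-1 * ((q + 1) * m))%N by rewrite cardF predn_exp -Hell.
rewrite Hell in Hr.
set d := ((q + 1 - (h * q + 1) %% (q + 1)) %% (q + 1))%N.
have dq : d < q by exact: d_lt.
set phi0 : {ffun 'I_E -> 'I_q} := [ffun _ => Ordinal dq].
have S1 : (\sum_(x : F) (fpoly_map q r a x) ^+ (q.-1 * m) = 0)%R.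
  have -> : (\sum_(x : F) (fpoly_map q r a x) ^+ (q.-1 * m) = \sum_(x : F) x ^+ (q.-1 * m))%R.
    by rewrite [RHS](reindex (fpoly_map q r a) (onW_bij _ bij)).
  apply: sum_pow_ndvd; rewrite Hcard1 dvdn_pmul2l; last by lia.
  by apply/negP => /(dvdn_leq m0); rewrite leqNgt ltn_Pmull // addn1 ltnS ltnW.
have S2 : (\sum_(x : F) (fpoly_map q r a x) ^+ (q.-1 * m) =
    - \prod_(i < E) (- a ^+ ((q ^ 2) ^ i)%N) ^+ (q.-1 - d))%R.
  rewrite /fpoly_map; under eq_bigr => x _ do rewrite expand //.
  rewrite exchange_big /= (bigD1 phi0) //= [X in (_ + X)%R]big1 ?addr0.
    rewrite -mulr_sumr sum_pow_dvd //; last first.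
      rewrite Hcard1 dvdn_pmul2l; last by lia.
      rewrite (@nt_key q E r h (fun i => nat_of_ord (phi0 i)) q1 E0 (fun i => ltn_ord _) Hr Hh).
      by apply/forallP => i; rewrite ffunE.
    rewrite muln_gt0 addn_gt0 muln_gt0 r0 m0 /=; lia.
    rewrite mulrN1; congr (- _)%R; apply: eq_bigr => i _; by rewrite ffunE.
  move=> phi nphi; rewrite -mulr_sumr sum_pow_ndvd ?mulr0 //.
  rewrite Hcard1 dvdn_pmul2l; last by lia.
  rewrite (@nt_key q E r h (fun i => nat_of_ord (phi i)) q1 E0 (fun i => ltn_ord _) Hr Hh).
  apply/negP => /forallP H; move/negP: nphi; apply; apply/eqP/ffunP => i.
  by rewrite ffunE; apply/val_inj => /=; apply/eqP; exact: H.
move: S2; rewrite S1 => /esym /eqP; rewrite oppr_eq0.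
apply/negP/prodf_neq0 => i _; rewrite expf_neq0 // oppr_eq0 expf_neq0 //.
Qed.
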